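(* Let $d\ge2$, $0<4\gamma<\epsilon<\tfrac12$, $L>0$ and $\delta=1/L$. Let $\sigma\in\{-1,1\}^d$ and let $\mathbf{p}\in\mathrm{Gol}^{\triangle}_d(L)$ satisfy $\mathbf{v}_\sigma(\delta)^T\mathbf{p}=1$ and $\mathbf{v}_\tau(\delta)^T\mathbf{p}<1$ for all $\tau\ne\sigma$. Then $\mathbf{p}$ can be written as a convex combination of exactly $d$ vertices, namely $\mathbf{p}=\sum_{k=1}^d\alpha_{(k,\sigma_k)}\mathbf{w}_{(k,\sigma_k)}(L)$ with $\sum_{k=1}^d\alpha_{(k,\sigma_k)}=1$ and $\alpha_{(k,\sigma_k)}>0$ for all $k$; moreover, this convex combination is the unique convex combination of the $2d$ points $\mathbf{w}_{(k,s)}(L)$, $k\in\{1,\dots,d\}$, $s\in\{-1,1\}$, that equals $\mathbf{p}$.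
   Context: Goldfarb cube: $\mathrm{Gol}_d=\{\mathbf{x}\in\mathbb{R}^d:-z_k\le x_k\le z_k,\ 1\le k\le d\}$ with $z_1=1$, $z_2=1-\epsilon-\epsilon x_1$, $z_k=1-\epsilon+\epsilon\gamma-\epsilon(x_{k-1}-\gamma x_{k-2})$ ($k\ge3$); it is a full-dimensional polytope with origin in its interior, with $2d$ facets (one per inequality) and $2^d$ distinct vertices $\mathbf{v}_\sigma$, $\sigma\in\{-1,1\}^d$, where $\mathbf{v}_\sigma$ is the point at which, for each $k$, $x_k\le z_k$ (if $\sigma_k=1$) resp. $-z_k\le x_k$ (if $\sigma_k=-1$) is tight; $\mathbf{v}_\sigma$ lies on exactly these $d$ facets. For $(k,s)\in\{1,\dots,d\}\times\{-1,1\}$, $\mathbf{w}_{(k,s)}$ is the unique vector such that the inequality $x_k\le z_k$ (for $s=1$) or $-z_k\le x_k$ (for $s=-1$) is equivalent to $\mathbf{w}_{(k,s)}^T\mathbf{x}\le1$; explicitly $\mathbf{w}_{(1,s)}=s\mathbf{e}_1$, $\mathbf{w}_{(2,s)}=(\epsilon\mathbf{e}_1+s\mathbf{e}_2)/(1-\epsilon)$, $\mathbf{w}_{(k,s)}=(-\epsilon\gamma\mathbf{e}_{k-2}+\epsilon\mathbf{e}_{k-1}+s\mathbf{e}_k)/(1-\epsilon+\epsilon\gamma)$ for $k\ge3$. The dual Goldfarb cube $\mathrm{Gol}^{\triangle}_d:=\{\mathbf{x}:\mathbf{v}_\tau^T\mathbf{x}\le1\ \forall\tau\}$ is the convex hull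 of the $2d$ points $\mathbf{w}_{(k,s)}$, which are its vertices. Stretching: $\mathbf{x}(t):=(tx_1,\dots,tx_{d-2},x_{d-1},x_d)^T$; $\mathrm{Gol}^{\triangle}_d(L):=\{\mathbf{x}(L):\mathbf{x}\in\mathrm{Gol}^{\triangle}_d\}=\mathrm{conv}\{\mathbf{w}_{(k,s)}(L)\}=\{\mathbf{x}:\mathbf{v}_\tau(1/L)^T\mathbf{x}\le1\ \forall\tau\}$. *)

(* Defs.v *)
(* Points of R^d are row vectors 'rV[R]_d, coordinates are
   0-based: coordinate x_k of the paper is x 0 (k-1). *)
From HB Require Import structures.
From mathcomp Require Import all_boot all_order all_algebra.
Set Implicit Arguments. Unset Strict Implicit. Unset Printing Implicit Defensive.
Import Order.TTheory GRing.Theory Num.Theory.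
Local Open Scope ring_scope.

Section Goldfarb.
Variables (R : realFieldType) (d : nat) (eps gam : R).

Definition sgb (b : bool) : R := if b then 1 else -1.

Definition sgnat (sigma : {ffun 'I_d -> bool}) (n : nat) : R :=
  if (insub n : option 'I_d) is Some i then sgb (sigma i) else 1.

Definition xat (x : 'rV[R]_d) (n : nat) : R :=
  if (insub n : option 'I_d) is Some i then x 0 i else 0.

Definition zk (x : 'rV[R]_d) (k : 'I_d) : R :=
  match val k with
  | 0 => 1
  | 1 => 1 - eps - eps * xat x 0
  | k'.+2 => 1 - eps + eps * gam - eps * (xat x k'.+1 - gam * xat x k')
  end.

Definition Gol : pred 'rV[R]_d := fun x => [forall k, (- zk x k <= x 0 k) && (x 0 k <= zk x k)].

(* Coordinates of the vertex v_sigma, computed recursively: vrec n = (x_n, x_{n-1})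
   where x_n = sigma_n * z_n (the chosen inequality is tight). *)
Fixpoint vrec (sg : nat -> R) (n : nat) : R * R :=
  match n with
  | 0 => (sg 0%N, 0)
  | m.+1 =>
      let ab := vrec sg m in
      ((sg m.+1) * (if m == 0%N then 1 - eps - eps * ab.1
                    else 1 - eps + eps * gam - eps * (ab.1 - gam * ab.2)), ab.1)
  end.

Definition vtx (sigma : {ffun 'I_d -> bool}) : 'rV[R]_d :=
  \row_i (vrec (sgnat sigma) (val i)).1.

Definition wv (k : 'I_d) (s : bool) : 'rV[R]_d :=
  \row_i (match val k with
          | 0 => if val i == val k then sgb s else 0
          | 1 => ((if val i == 0%N then eps else 0) + (if val i == val k then sgb s else 0))
                 / (1 - eps)
          | _ => ((if (val i).+2 == val k then - (eps * gam) else 0)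
                  + (if (val i).+1 == val k then eps else 0)
                  + (if val i == val k then sgb s else 0)) / (1 - eps + eps * gam)
          end).

Definition stretch (t : R) (x : 'rV[R]_d) : 'rV[R]_d :=
  \row_i (if (val i < d - 2)%N then t * x 0 i else x 0 i).

Definition dotv (u x : 'rV[R]_d) : R := \sum_i u 0 i * x 0 i.

Definition DualGol : pred 'rV[R]_d := fun x => [forall tau, dotv (vtx tau) x <= 1].

Definition DualGolL (L : R) (y : 'rV[R]_d) : Prop :=
  exists2 x, DualGol x & y = stretch L x.

End Goldfarb.

(* Main.v *)
Require Import Defs.
From HB Require Import structures.
From mathcomp Require Import all_boot all_order all_algebra.
From mathcomp Require Import ring lra.
Set Implicit Arguments. Unset Strict Implicit.
Import Order.TTheory GRing.Theory Num.Theory.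
Local Open Scope ring_scope.

Definition vn (R : realFieldType) (eps gam : R) (sg : nat -> R) n := (vrec eps gam sg n).1.

Lemma vn0 (R : realFieldType) (eps gam : R) sg : vn eps gam sg 0 = sg 0%N.
Proof. by []. Qed.
Lemma vn1 (R : realFieldType) (eps gam : R) sg :
  vn eps gam sg 1 = sg 1%N * (1 - eps - eps * vn eps gam sg 0).
Proof. by []. Qed.
Lemma vnS2 (R : realFieldType) (eps gam : R) sg m :
  vn eps gam sg m.+2 = sg m.+2 * (1 - eps + eps * gam - eps * (vn eps gam sg m.+1 - gam * vn eps gam sg m)).
Proof. by []. Qed.

Lemma vinv (R : realFieldType) (eps gam : R) sg :
  0 < gam -> 4 * gam < eps -> eps < 1 / 2 -> (forall n, sg n = 1 \/ sg n = -1) ->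
  forall n, [/\ -1 <= vn eps gam sg n <= 1, -1 <= vn eps gam sg n.+1 <= 1 &
     eps / 2 * (1 + vn eps gam sg n) <= 1 + vn eps gam sg n.+1].
Proof.
move=> hg hge he hsg; elim=> [|n [/andP[ha1 ha2] /andP[hb1 hb2] hab]].
  rewrite vn1 vn0; case: (hsg 0%N) => ->; case: (hsg 1%N) => ->;
  split; try (apply/andP; split); lra.
rewrite vnS2; move: hab ha1 ha2 hb1 hb2.
set a := vn _ _ _ n; set b := vn _ _ _ n.+1 => hab ha1 ha2 hb1 hb2.
have h1 : 0 <= (eps / 2 - 2 * gam) * (1 + a) by apply: mulr_ge0; lra.
have h2 : 0 <= eps * (1 + b - eps/2 * (1 + a)) by apply: mulr_ge0; lra.
have h3 : 0 <= eps * (1 - b) by apply: mulr_ge0; lra.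
have h4 : 0 <= eps * gam * (1 - a) by apply: mulr_ge0; [apply: mulr_ge0|]; lra.
have h5 : 0 <= eps * gam * (1 + a) by apply: mulr_ge0; [apply: mulr_ge0|]; lra.
have h6 : 0 <= eps * (1 + b) by apply: mulr_ge0; lra.
have h8 : 0 <= eps * ((eps / 4 - gam) * (1 + a)) by apply: mulr_ge0; [lra|apply: mulr_ge0; lra].
case: (hsg n.+2) => ->; split; try (apply/andP; split); try lra.
all: nra.
Qed.

Lemma sum_pick (R : realFieldType) d (f : nat -> R) (c : R) n : (n < d)%N ->
  \sum_(i < d) f (val i) * (if val i == n then c else 0) = f n * c.
Proof.
move=> hn; rewrite (bigD1 (Ordinal hn)) //= eqxx big1 ?addr0 // => i hi.
case: eqP => [e|]; last by rewrite mulr0.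
by move: hi; rewrite (_ : i = Ordinal hn) ?eqxx //; apply: val_inj.
Qed.

Definition Fw (R : realFieldType) (eps gam : R) sg (k : nat) (s : R) : R :=
  match k with
  | 0 => vn eps gam sg 0 * s
  | 1 => (eps * vn eps gam sg 0 + vn eps gam sg 1 * s) / (1 - eps)
  | m.+2 => (- (eps * gam) * vn eps gam sg m + eps * vn eps gam sg m.+1
             + vn eps gam sg m.+2 * s) / (1 - eps + eps * gam)
  end.

Lemma dot_wv (R : realFieldType) d (eps gam : R) (tau : {ffun 'I_d -> bool}) k s :
  dotv (vtx eps gam tau) (wv eps gam k s) = Fw eps gam (sgnat R tau) (val k) (sgb R s).
Proof.
rewrite /dotv; under eq_bigr => i _ do rewrite !mxE.
case: k => [[|[|m]] hk] /=.
- exact: (sum_pick (vn eps gam (sgnat R tau))).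
- under eq_bigr => i _ do rewrite mulrA mulrDr.
  rewrite -mulr_suml big_split /=.
  rewrite (sum_pick (vn eps gam (sgnat R tau))) ?(sum_pick (vn eps gam (sgnat R tau))) //.
  by congr (_ / _); ring.
  exact: ltnW.
- under eq_bigr => i _ do rewrite !eqSS mulrA !mulrDr.
  rewrite -mulr_suml !big_split /=.
  rewrite !(sum_pick (vn eps gam (sgnat R tau))) //; last first.
  + exact: (ltnW (ltnW hk)).
  + exact: ltnW.
  by congr (_ / _); ring.
Qed.

Lemma Fw_eq (R : realFieldType) (eps gam : R) sg k s :
  0 < gam -> 4 * gam < eps -> eps < 1 / 2 -> (forall n, sg n = 1 \/ sg n = -1) ->
  s = sg k -> Fw eps gam sg k s = 1.
Proof.
move=> hg hge he hsg ->.
have hD : 1 - eps + eps * gam != 0.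
  by rewrite lt0r_neq0 // addr_gt0 ?mulr_gt0; lra.
have hE : 1 - eps != 0 by rewrite lt0r_neq0 //; lra.
case: k => [|[|m]] /=.
- by rewrite vn0; case: (hsg 0%N) => ->; ring.
- rewrite vn1; case: (hsg 1%N) => ->; rewrite -[X in _ = X](mulfV hE); congr (_ / _); ring.
- rewrite vnS2; case: (hsg m.+2) => ->; rewrite -[X in _ = X](mulfV hD); congr (_ / _); ring.
Qed.
Lemma Fw_lt (R : realFieldType) (eps gam : R) sg k s :
  0 < gam -> 4 * gam < eps -> eps < 1 / 2 -> (forall n, sg n = 1 \/ sg n = -1) ->
  s = - sg k -> Fw eps gam sg k s < 1.
Proof.
move=> hg hge he hsg ->.
have hD : 0 < 1 - eps + eps * gam by rewrite addr_gt0 ?mulr_gt0; lra.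
have hE : 0 < 1 - eps by lra.
case: k => [|[|m]] /=.
- by rewrite vn0; case: (hsg 0%N) => ->; lra.
- rewrite ltr_pdivrMr // mul1r vn1 vn0.
  by case: (hsg 1%N) => ->; case: (hsg 0%N) => ->; lra.
- rewrite ltr_pdivrMr // mul1r vnS2.
  have [/andP[ha1 ha2] /andP[hb1 hb2] _] := vinv hg hge he hsg m.
  move: ha1 ha2 hb1 hb2.
  set a := vn _ _ _ m; set b := vn _ _ _ m.+1 => ha1 ha2 hb1 hb2.
  have h3 : 0 <= eps * (1 - b) by apply: mulr_ge0; lra.
  have h5 : 0 <= eps * gam * (1 + a) by apply: mulr_ge0; [apply: mulr_ge0|]; lra.
  by case: (hsg m.+2) => ->; nra.
Qed.

Lemma sgnat_pm (R : realFieldType) d (tau : {ffun 'I_d -> bool}) n :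
  sgnat R tau n = 1 \/ sgnat R tau n = -1.
Proof. by rewrite /sgnat; case: insub => [i|]; [case: (tau i); [left|right]|left]. Qed.

Lemma sgnat_val (R : realFieldType) d (tau : {ffun 'I_d -> bool}) (k : 'I_d) :
  sgnat R tau (val k) = sgb R (tau k).
Proof. by rewrite /sgnat valK. Qed.

Lemma facet_eq (R : realFieldType) d (eps gam : R) (tau : {ffun 'I_d -> bool}) k s :
  0 < gam -> 4 * gam < eps -> eps < 1 / 2 ->
  s = tau k -> dotv (vtx eps gam tau) (wv eps gam k s) = 1.
Proof.
move=> hg hge he ->; rewrite dot_wv; apply: Fw_eq => //; first exact: sgnat_pm.
by rewrite sgnat_val.
Qed.

Lemma facet_lt (R : realFieldType) d (eps gam : R) (tau : {ffun 'I_d -> bool}) k s :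
  0 < gam -> 4 * gam < eps -> eps < 1 / 2 ->
  s != tau k -> dotv (vtx eps gam tau) (wv eps gam k s) < 1.
Proof.
move=> hg hge he hs; rewrite dot_wv; apply: Fw_lt => //; first exact: sgnat_pm.
by rewrite sgnat_val; move: hs; case: s; case: (tau k) => //= _; rewrite opprK.
Qed.

Lemma dot_sum (R : realFieldType) d (I : Type) (r : seq I) (u : 'rV[R]_d) (f : I -> 'rV[R]_d) :
  dotv u (\sum_(i <- r) f i) = \sum_(i <- r) dotv u (f i).
Proof.
rewrite /dotv; under eq_bigr => j _ do rewrite summxE mulr_sumr.
by rewrite exchange_big.
Qed.

Lemma dot_scale (R : realFieldType) d (u y : 'rV[R]_d) a :
  dotv u (a *: y) = a * dotv u y.
Proof.
rewrite /dotv mulr_sumr; apply: eq_bigr => j _; rewrite mxE; ring.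
Qed.

Lemma dot_stretch (R : realFieldType) d (L : R) (u x : 'rV[R]_d) :
  L != 0 -> dotv (stretch L^-1 u) (stretch L x) = dotv u x.
Proof.
move=> hL; rewrite /dotv; apply: eq_bigr => j _; rewrite !mxE.
case: ifP => _ //; by field.
Qed.

Lemma stretch_sum (R : realFieldType) d (L : R) (I : Type) (r : seq I) (f : I -> 'rV[R]_d) :
  stretch L (\sum_(i <- r) f i) = \sum_(i <- r) stretch L (f i).
Proof.
apply/rowP => j; rewrite !mxE !summxE.
case: ifP => h; last by apply: eq_bigr => i _; rewrite mxE h.
rewrite mulr_sumr; apply: eq_bigr => i _; by rewrite mxE h.
Qed.

Lemma stretch_scale (R : realFieldType) d (L : R) a (y : 'rV[R]_d) :
  stretch L (a *: y) = a *: stretch L y.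
Proof.
apply/rowP => j; rewrite !mxE; case: ifP => _; ring.
Qed.

Lemma stretch_inj (R : realFieldType) d (L : R) (x y : 'rV[R]_d) :
  L != 0 -> stretch L x = stretch L y -> x = y.
Proof.
move=> hL e; apply/rowP => j; have := congr1 (fun z : 'rV[R]_d => z 0 j) e; rewrite !mxE.
case: ifP => _ // /(congr1 (fun t => L^-1 * t)).
by rewrite !mulrA mulVf // !mul1r.
Qed.

Lemma nS1 n : (n.+1 == n) = false. Proof. by elim: n. Qed.
Lemma nS2 n : (n.+2 == n) = false. Proof. by elim: n. Qed.

From mathcomp Require Import zify.

Lemma wv_trig (R : realFieldType) d (eps gam : R) (k j : 'I_d) s :
  (k < j)%N -> wv eps gam k s 0 j = 0.
Proof.
rewrite mxE; case: j => j hj; case: k => [[|[|m]] hk] /= hkj.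
- by rewrite (_ : (j == 0%N) = false) //; apply/negbTE/eqP; lia.
- rewrite (_ : (j == 0%N) = false); last by apply/negbTE/eqP; lia.
  rewrite (_ : (j == 1%N) = false); last by apply/negbTE/eqP; lia.
  by rewrite addr0 mul0r.
- rewrite (_ : (j.+2 == m.+2) = false); last by apply/negbTE/eqP; lia.
  rewrite (_ : (j.+1 == m.+2) = false); last by apply/negbTE/eqP; lia.
  rewrite (_ : (j == m.+2) = false); last by apply/negbTE/eqP; lia.
  by rewrite !addr0 mul0r.
Qed.

Lemma wv_diag (R : realFieldType) d (eps gam : R) (k : 'I_d) s :
  0 < gam -> 4 * gam < eps -> eps < 1 / 2 -> wv eps gam k s 0 k != 0.
Proof.
move=> hg hge he.
have hD : 0 < 1 - eps + eps * gam by rewrite addr_gt0 ?mulr_gt0; lra.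
have hE : 0 < 1 - eps by lra.
have hs : sgb R s != 0 by case: s => /=; rewrite ?oppr_eq0 oner_eq0.
rewrite mxE; case: k => [[|[|m]] hk] /=.
- by rewrite ?eqxx.
- by rewrite ?eqxx ?add0r mulf_neq0 // invr_eq0 lt0r_neq0.
- by rewrite ?nS1 ?nS2 ?eqxx !add0r mulf_neq0 // invr_eq0 lt0r_neq0.
Qed.

Unset Implicit Arguments.
Set Strict Implicit.

Theorem lemma5 (R : realFieldType) (d : nat) (eps gam L : R)
  (sigma : {ffun 'I_d -> bool}) (p : 'rV[R]_d) :
  (2 <= d)%N -> 0 < 4 * gam -> 4 * gam < eps -> eps < 1 / 2 -> 0 < L ->
  DualGolL eps gam L p ->
  dotv (stretch L^-1 (vtx eps gam sigma)) p = 1 ->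
  (forall tau : {ffun 'I_d -> bool}, tau != sigma ->
     dotv (stretch L^-1 (vtx eps gam tau)) p < 1) ->
  exists alpha : 'I_d -> R,
    [/\ (forall k, 0 < alpha k),
        \sum_k alpha k = 1,
        p = \sum_k alpha k *: stretch L (wv eps gam k (sigma k)) &
        (forall beta : 'I_d -> bool -> R,
           (forall k s, 0 <= beta k s) ->
           \sum_k \sum_s beta k s = 1 ->
           p = \sum_k \sum_s beta k s *: stretch L (wv eps gam k s) ->
           forall k s, beta k s = (if s == sigma k then alpha k else 0))].
Proof.
move=> hd hg4 hge he hL [x _ ->] hv htau.
have hg : 0 < gam by lra.
have hL0 : L != 0 by rewrite lt0r_neq0.
rewrite dot_stretch // in hv.
have {}htau : forall tau, tau != sigma -> dotv (vtx eps gam tau) x < 1.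
  by move=> tau /htau; rewrite dot_stretch.
pose W : 'M[R]_d := \matrix_(k, j) wv eps gam k (sigma k) 0 j.
have hrow : forall k, row k W = wv eps gam k (sigma k).
  by move=> k; apply/rowP => j; rewrite !mxE.
have Wu : W \in unitmx.
  rewrite unitmxE unitfE det_trig.
    by apply/prodf_neq0 => i _; rewrite mxE wv_diag.
  apply/forallP => i; apply/forallP => j; apply/implyP => hij.
  by rewrite mxE wv_trig.
pose a := x *m invmx W.
have Hx : x = \sum_k a 0 k *: wv eps gam k (sigma k).
  rewrite -{1}(mulmxKV Wu x) -/a mulmx_sum_row.
  by apply: eq_bigr => k _; rewrite hrow.
have hsum : \sum_k a 0 k = 1.
  rewrite -hv Hx dot_sum; apply: eq_bigr => k _.
  by rewrite dot_scale facet_eq // mulr1.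
exists (fun k => a 0 k); split => //.
- move=> k.
  pose tau : {ffun 'I_d -> bool} := [ffun j => if j == k then ~~ sigma k else sigma j].
  have hne : tau != sigma.
    apply/eqP => e; have := congr1 (fun f : {ffun 'I_d -> bool} => f k) e.
    by rewrite /= ffunE eqxx; case: (sigma k).
  have := htau _ hne; rewrite Hx dot_sum (bigD1 k) //=.
  rewrite (bigD1 k) //= in hsum.
  rewrite (eq_bigr (fun j => a 0 j)); last first.
    move=> j hj; rewrite dot_scale facet_eq ?mulr1 //.
    by rewrite ffunE (negbTE hj).
  have hc := @facet_lt R d eps gam tau k (sigma k) hg hge he.
  rewrite ffunE eqxx in hc.
  have hnn : sigma k != ~~ sigma k by case: (sigma k).
  have {}hc := hc hnn.
  rewrite dot_scale; set c := dotv _ _ in hc *; move=> h.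
  nra.
- by rewrite Hx stretch_sum; apply: eq_bigr => k _; rewrite stretch_scale.
- move=> beta hb0 hb1 hbx.
  have Hxb : x = \sum_k \sum_s beta k s *: wv eps gam k s.
    apply: (stretch_inj hL0); rewrite hbx stretch_sum; apply: eq_bigr => k _.
    by rewrite stretch_sum; apply: eq_bigr => s _; rewrite stretch_scale.
  have h0 : \sum_k \sum_s beta k s * (1 - dotv (vtx eps gam sigma) (wv eps gam k s)) = 0.
    under eq_bigr => k _ do under eq_bigr => s _ do rewrite mulrBr mulr1.
    under eq_bigr => k _ do rewrite sumrB.
    rewrite sumrB hb1 -hv Hxb dot_sum; apply/eqP; rewrite subr_eq0; apply/eqP; apply: eq_bigr => k _.
    by rewrite dot_sum; apply: eq_bigr => s _; rewrite dot_scale.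
  have hterm : forall k s, s != sigma k -> beta k s = 0.
    move=> k s hs.
    have hle : forall k s, 0 <= beta k s * (1 - dotv (vtx eps gam sigma) (wv eps gam k s)).
      move=> k' s'; apply: mulr_ge0 => //; rewrite subr_ge0.
      case: (eqVneq s' (sigma k')) => [->|hs'].
        by rewrite facet_eq.
      by apply/ltW; apply: facet_lt.
    have h1 := psumr_eq0P (fun k _ => sumr_ge0 _ (fun s _ => hle k s)) h0 (i:=k) isT.
    have := psumr_eq0P (fun s _ => hle k s) h1 (i:=s) isT.
    have hc := @facet_lt R d eps gam sigma k s hg hge he hs.
    move/eqP; rewrite mulf_eq0 subr_eq0 => /orP[/eqP //|/eqP hc1].
    by move: hc; rewrite hc1 ltxx.
  pose g : 'rV[R]_d := \row_k beta k (sigma k).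
  have hg1 : x = g *m W.
    rewrite mulmx_sum_row Hxb; apply: eq_bigr => k _.
    rewrite hrow mxE (bigD1 (sigma k)) //= big1 ?addr0 //.
    by move=> s hs; rewrite hterm // scale0r.
  have hga : g = a by rewrite /a hg1 mulmxK.
  move=> k s; case: eqP => [->|/eqP hs]; last exact: hterm.
  by rewrite -hga mxE.
Qed.
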